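(* Let $H=(V,E)$ be a capacitated hypergraph, let $v_1,\ldots,v_n$ be a tight ordering for $H$, and let $G=(V,E')$ be the corresponding tight graph. Then for all $1\le i<j\le n$, $d'(V_i,v_j;G)=d'(V_i,v_j;H)$.
   Context: A hypergraph $H=(V,E)$ has finite vertex set $V$, a finite multiset $E$ of edges (subsets of $V$), and capacities $c:E\to\mathbb{R}_{\ge0}$. For disjoint $A,B\subseteq V$, $d'(A,B;H)$ is the total capacity of edges $e$ with $e\cap A\ne\emptyset$, $e\cap B\ne\emptyset$ and $e\subseteq A\cup B$ (a vertex $v$ stands for $\{v\}$). For an ordering $v_1,\ldots,v_n$, $V_i=\{v_1,\ldots,v_i\}$ ($V_0=\emptyset$); it is a tight ordering if $d'(V_{i-1},v_i;H)\ge d'(V_{i-1},v_j;H)$ for all $1\le i<j\le n$. The tight graph $G=(V,E')$ with respect to $H$ and this ordering has, for each $e\in E$, an edge $e'$ of capacity $c(e)$ consisting of the last two vertices of $e$ in the ordering (the last $\min(2,|e|)$ vertices). *)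

(* Defs.v *)
From mathcomp Require Import all_boot all_order all_algebra.
Set Implicit Arguments. Unset Strict Implicit. Unset Printing Implicit Defensive.
Import Order.TTheory GRing.Theory Num.Theory.
Local Open Scope ring_scope.

Section Hyper.
Variables (R : realDomainType) (V : finType).

Definition hypergraph := seq ({set V} * R).

Definition dprime (H : hypergraph) (A B : {set V}) : R :=
  \sum_(e <- H | [&& e.1 :&: A != set0, e.1 :&: B != set0 & e.1 \subset A :|: B]) e.2.

Definition is_ordering (s : seq V) : Prop := uniq s /\ (forall v : V, v \in s).

Definition vprefix (s : seq V) (i : nat) : {set V} := [set x in take i s].

(* the vertex at 0-based position j, i.e. v_(j+1) *)
Definition vtx (s : seq V) (j : 'I_(size s)) : V := tnth (in_tuple s) j.




(* tight ordering: for 1 <= i < j <= n, d'(V_(i-1), v_i) >= d'(V_(i-1), v_j);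
   stated with 0-based positions i < j. *)
Local Arguments vtx : clear implicits.
Definition tight_ordering (H : hypergraph) (s : seq V) : Prop :=
  forall i j : 'I_(size s), (i < j)%N ->
    dprime H (vprefix s i) [set vtx s j] <= dprime H (vprefix s i) [set vtx s i].

(* last min(2,|e|) vertices of e in the ordering s *)
Definition tight_edge (s : seq V) (e : {set V}) : {set V} :=
  let t := [seq x <- s | x \in e] in [set x in drop (size t - 2)%N t].

Definition tight_graph (s : seq V) (H : hypergraph) : hypergraph :=
  [seq (tight_edge s e.1, e.2) | e <- H].

End Hyper.
Arguments vtx {V} s j.

(* Main.v *)
Require Import Defs.
From mathcomp Require Import all_boot all_order all_algebra.
From mathcomp Require Import zify.
Import Order.TTheory GRing.Theory Num.Theory.
Local Open Scope ring_scope.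

Lemma key (V : finType) (s : seq V) (i : nat) (v : V) (e : {set V}) :
  uniq s -> (forall x, x \in s) -> v \in drop i s ->
  let A := [set x in take i s] in
  let B := [set v] in
  let e' := tight_edge s e in
  [&& e' :&: A != set0, e' :&: B != set0 & e' \subset A :|: B] =
  [&& e :&: A != set0, e :&: B != set0 & e \subset A :|: B].
Proof.
move=> us alls vd A B e'.
have disj x : x \in take i s -> x \in drop i s -> False.
  move: us; rewrite -{1}(cat_take_drop i s) cat_uniq => /and3P[_ /hasPn H _] xt xd.
  by move: (H x xd) => /=; rewrite xt.
set t1 := [seq x <- take i s | x \in e].
set t2 := [seq x <- drop i s | x \in e].
have et : [seq x <- s | x \in e] = t1 ++ t2 by rewrite -filter_cat cat_take_drop.
have e'E : e' = [set x in drop (size (t1 ++ t2) - 2) (t1 ++ t2)].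
  by rewrite /e' /tight_edge et.
have memt1 x : (x \in t1) = (x \in e) && (x \in take i s) by rewrite mem_filter.
have memt2 x : (x \in t2) = (x \in e) && (x \in drop i s) by rewrite mem_filter.
have ue2 : uniq t2.
  apply: filter_uniq; move: us; rewrite -{1}(cat_take_drop i s) cat_uniq.
  by case/and3P.
clearbody t1 t2.
apply/idP/idP.
- case/and3P => /set0Pn[a]; rewrite e'E !inE => /andP[ad aA].
  move=> /set0Pn[b]; rewrite !inE => /andP[bd /eqP bv] _; subst b.
  have de x : x \in drop (size (t1 ++ t2) - 2) (t1 ++ t2) -> x \in e.
    move/mem_drop; rewrite mem_cat memt1 memt2.
    by case/orP => /andP[].
  have sz : (size t2 <= 1)%N.
    rewrite leqNgt; apply/negP => sz2.
    move: ad; rewrite drop_cat size_cat.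
    have -> : (size t1 + size t2 - 2 < size t1)%N = false by lia.
    have -> : (size t1 + size t2 - 2 - size t1 = size t2 - 2)%N by lia.
    move/mem_drop; rewrite memt2 => /andP[_ ad].
    by apply: (disj a).
  have vt2 : v \in t2 by rewrite memt2 de.
  have t2v x : x \in t2 -> x = v.
    move: sz vt2; case: (t2) => [|y [|z w]] //=.
    by rewrite !inE => _ /eqP-> /eqP->.
  apply/and3P; split.
  + by apply/set0Pn; exists a; rewrite !inE de.
  + by apply/set0Pn; exists v; rewrite !inE de // eqxx.
  + apply/subsetP => x xe; rewrite !inE.
    have : x \in t1 ++ t2.
      rewrite mem_cat memt1 memt2 xe /= -mem_cat cat_take_drop.
      exact: alls.
    rewrite mem_cat => /orP[|/t2v ->]; last by rewrite eqxx orbT.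
    by rewrite memt1 => /andP[_ xt]; apply/orP; left.
- case/and3P => /set0Pn[a]; rewrite !inE => /andP[ae aA].
  move=> /set0Pn[b]; rewrite !inE => /andP[be /eqP bv] sub; subst b.
  have t2v x : x \in t2 -> x = v.
    rewrite memt2 => /andP[xe xd].
    move: (subsetP sub x xe); rewrite !inE => /orP[xt|/eqP //].
    by case: (disj x xt xd).
  have vt2 : v \in t2 by rewrite memt2 be.
  have t2E : t2 = [:: v].
    move: ue2 t2v vt2; case: (t2) => [|y [|z w]] //=.
    + by move=> _ _; rewrite inE => /eqP ->.
    + move=> /andP[yn _] h _.
      have hy := h y (mem_head _ _).
      have hz : z = v by apply: h; rewrite !inE eqxx orbT.
      by rewrite hy hz inE eqxx in yn.
  have at1 : a \in t1 by rewrite memt1 ae.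
  rewrite t2E in e'E.
  clear et; move: e'E memt1 at1; case/lastP: t1 => [//|t1' c] e'E memt1 _.
  have ct : c \in take i s.
    by move: (memt1 c); rewrite mem_rcons inE eqxx /= => /esym/andP[].
  move: e'E; rewrite cat_rcons size_cat /=.
  have -> : (size t1' + 2 - 2 = size t1')%N by lia.
  rewrite drop_size_cat // => ->.
  apply/and3P; split.
  + by apply/set0Pn; exists c; rewrite !inE eqxx.
  + by apply/set0Pn; exists v; rewrite !inE eqxx orbT.
  + apply/subsetP => x; rewrite !inE => /orP[/eqP->|/eqP->].
    * by rewrite ct.
    * by rewrite eqxx orbT.
Qed.

(* j is 0-based: vtx s j = v_(j+1); the condition i < j+1 is (i <= j)%N. *)
Theorem mainTheorem17 (R : realDomainType) (V : finType)
    (H : hypergraph R V) (s : seq V) :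
  (forall e, e \in H -> 0 <= e.2) ->
  is_ordering s ->
  tight_ordering H s ->
  forall (i : nat) (j : 'I_(size s)), (1 <= i)%N -> (i <= j)%N ->
    dprime (tight_graph s H) (vprefix s i) [set vtx s j] =
    dprime H (vprefix s i) [set vtx s j].
Proof.
move=> _ [us alls] _ i j _ ij.
rewrite /dprime /tight_graph big_map; apply: eq_bigl => e /=.
apply: key => //.
rewrite /vtx (tnth_nth (tnth (in_tuple s) j)) /=.
rewrite -(subnKC ij) -nth_drop; apply: mem_nth.
rewrite size_drop; have h := ltn_ord j.
by rewrite ltn_sub2r // (leq_ltn_trans ij h).
Qed.
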